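(* Let $v\in\Sigma^*$ and let $u$ be a $v$-minimal word. Then for any $a,b\in\Sigma^*$, the word $aub$ either belongs to $\mathrm{Rad}(\mathcal{A})$ or is $v$-minimal.
   Context: Let $\mathcal{A}=\langle Q,\Sigma,\delta\rangle$ be a synchronizing automaton with $n$ states $q_1,\dots,q_n$. Each word $u$ acts linearly on $\mathbb{C}Q$ by $q\mapsto q\cdot u$, preserving $w^\perp=\{x:\langle x,w\rangle=0\}$ with $w=q_1+\dots+q_n$; let $\rho:\Sigma^*\to\mathbb{M}_{n-1}(\mathbb{C})\cong\mathrm{End}(w^\perp)$ be the induced representation, $\mathcal{R}$ the $\mathbb{C}$-algebra generated by $\rho(\Sigma^* )$, and $\mathrm{Rad}(\mathcal{A})=\rho^{-1}(\mathrm{Rad}(\mathcal{R}))$ (Jacobson radical). Write $\mathcal{R}/\mathrm{Rad}(\mathcal{R})\cong\mathbb{M}_{n_1}(\mathbb{C})\times\dots\times\mathbb{M}_{n_k}(\mathbb{C})$ (Wedderburn–Artin), and let $\theta_i:\Sigma^*\to\mathbb{M}_{n_i}(\mathbb{C})$ be the composite of $\rho$, the quotient map, and the projection onto the $i$-th factor; $0_i$ is the zero matrix. A word is in $\mathrm{Rad}(\mathcal{A})$ iff $\theta_i$ of it is $0_i$ for all $i$. The support of a word $z$ is $\mathrm{supp}(z)=\{i\in[1,k]:\theta_i(z)\neq0_i\}$. For $v\in\Sigma^*$, a word $u\in\Sigma^*v\Sigma^*$ is $v$-minimal, and $\mathrm{supp}(u)$ is a $v$-minimal section, if $\mathrm{supp}(u)\neq\emptyset$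 and there is no $z\in\Sigma^*v\Sigma^*$ with $\emptyset\neq\mathrm{supp}(z)\subsetneq\mathrm{supp}(u)$. *)

(* Defs.v *)
From HB Require Import structures.
From mathcomp Require Import all_boot all_order all_algebra.
From mathcomp Require Import complex.
From mathcomp Require Import Rstruct.
Set Implicit Arguments. Unset Strict Implicit. Unset Printing Implicit Defensive.
Import Order.TTheory GRing.Theory Num.Theory.
Local Open Scope ring_scope.

Definition CC : Type := complex Rdefinitions.R.

Section Automaton.
(* An automaton with n = m.+1 states, states are 'I_m.+1, alphabet Sigma. *)
Variables (Sigma : finType) (m : nat) (delta : 'I_m.+1 -> Sigma -> 'I_m.+1).

Definition act (q : 'I_m.+1) (u : seq Sigma) : 'I_m.+1 := foldl delta q u.

Definition synchronizing : Prop :=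
  exists u : seq Sigma, forall p q, act p u = act q u.

(* Induced representation on w^perp, w = q_1 + ... + q_n, written in the basis
   f_i = q_i - q_n (i < n-1) of w^perp, for the right action x |-> x . u
   on row vectors: f_i . u = f_{i.u} - f_{n.u} (with f_n := 0). *)
Definition rho (u : seq Sigma) : 'M[CC]_m :=
  \matrix_(i < m, j < m)
     (((act (widen_ord (leqnSn m) i) u == widen_ord (leqnSn m) j)%:R : CC)
      - ((act ord_max u == widen_ord (leqnSn m) j)%:R : CC)).

(* The C-algebra R generated by rho(Sigma^* ) is the C-span of rho(Sigma^* )
   (which is already closed under products and contains rho(empty word) = 1). *)
Definition inR (x : 'M[CC]_m) : Prop :=
  exists (k : nat) (ws : k.-tuple (seq Sigma)) (c : k.-tuple CC),
    x = \sum_(i < k) tnth c i *: rho (tnth ws i).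

Definition leftIdeal (L : 'M[CC]_m -> Prop) : Prop :=
  [/\ forall x, L x -> inR x,
      L 0,
      forall x y, L x -> L y -> L (x - y)
    & forall r x, inR r -> L x -> L (r *m x)].

Definition maximalLeftIdeal (L : 'M[CC]_m -> Prop) : Prop :=
  [/\ leftIdeal L,
      exists x, inR x /\ ~ L x
    & forall L', leftIdeal L' -> (forall x, L x -> L' x) ->
        (forall x, L' x <-> L x) \/ (forall x, inR x -> L' x)].

Definition inRad (x : 'M[CC]_m) : Prop :=
  inR x /\ forall L, maximalLeftIdeal L -> L x.

Definition inRadA (u : seq Sigma) : Prop := inRad (rho u).

(* Wedderburn--Artin data: phi : R -> M_{n_1}(C) x ... x M_{n_k}(C) is a
   surjective unital C-algebra morphism whose kernel is Rad(R); i.e. phi is the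
   composite of the quotient map R -> R/Rad(R) with an isomorphism
   R/Rad(R) ~= prod_i M_{n_i}(C). *)
Definition WedderburnData (k : nat) (ns : 'I_k -> nat)
    (phi : 'M[CC]_m -> forall i : 'I_k, 'M[CC]_(ns i)) : Prop :=
  [/\ forall i, (0 < ns i)%N,
     [/\ forall x y, inR x -> inR y -> forall i, phi (x + y) i = phi x i + phi y i,
      forall (c : CC) x, inR x -> forall i, phi (c *: x) i = c *: phi x i,
      forall x y, inR x -> inR y -> forall i, phi (x *m y) i = phi x i *m phi y i
    & forall i, phi 1%:M i = 1%:M],
      forall f : (forall i : 'I_k, 'M[CC]_(ns i)),
        exists x, inR x /\ forall i, phi x i = f i
    & forall x, inR x -> ((forall i, phi x i = 0) <-> inRad x)].

Variables (k : nat) (ns : 'I_k -> nat)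
          (phi : 'M[CC]_m -> forall i : 'I_k, 'M[CC]_(ns i)).

(* theta_i = (projection_i) o (iso) o (quotient) o rho *)
Definition theta (i : 'I_k) (u : seq Sigma) : 'M[CC]_(ns i) := phi (rho u) i.

Definition supp (z : seq Sigma) : {set 'I_k} := [set i | theta i z != 0].

(* u in Sigma^* v Sigma^*  <->  v is a factor (infix) of u *)
Definition vMinimal (v u : seq Sigma) : Prop :=
  [/\ infix v u,
      supp u != set0
    & ~ (exists z : seq Sigma, [/\ infix v z, supp z != set0 & supp z \proper supp u])].

End Automaton.

(* Main.v *)
Require Import Defs.
From HB Require Import structures.
From mathcomp Require Import all_boot all_order all_algebra.
From mathcomp Require Import complex.
From mathcomp Require Import Rstruct.
Set Implicit Arguments. Unset Strict Implicit. Unset Printing Implicit Defensive.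
Import Order.TTheory GRing.Theory Num.Theory.
Local Open Scope ring_scope.

Lemma key_sum (m : nat) (p : 'I_m.+1) (g : 'I_m.+1 -> CC) :
  g ord_max = 0 ->
  \sum_(l < m) (((p == widen_ord (leqnSn m) l)%:R : CC) * g (widen_ord (leqnSn m) l)) = g p.
Proof.
move=> g0.
transitivity (\sum_(l < m.+1) (((p == l)%:R : CC) * g l)).
  by rewrite big_ord_recr /= g0 mulr0 addr0.
rewrite (bigD1 p) //= eqxx mul1r big1 ?addr0 // => l /negbTE.
by rewrite eq_sym => ->; rewrite mul0r.
Qed.

Lemma rho_mul (Sigma : finType) (m : nat) (delta : 'I_m.+1 -> Sigma -> 'I_m.+1)
  (u w : seq Sigma) : rho delta (u ++ w) = rho delta u *m rho delta w.
Proof.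
apply/matrixP => i j; rewrite !mxE.
under eq_bigr => l _ do rewrite !mxE mulrBl.
rewrite sumrB.
set g := fun q : 'I_m.+1 => (((act delta q w == widen_ord (leqnSn m) j)%:R : CC)
      - ((act delta ord_max w == widen_ord (leqnSn m) j)%:R : CC)).
have g0 : g ord_max = 0 by rewrite /g subrr.
rewrite (key_sum (act delta (widen_ord (leqnSn m) i) u) g0).
rewrite (key_sum (act delta ord_max u) g0).
rewrite /g /act !foldl_cat.
by rewrite opprB addrA subrK.
Qed.

Lemma inR_rho (Sigma : finType) (m : nat) (delta : 'I_m.+1 -> Sigma -> 'I_m.+1)
  (w : seq Sigma) : inR delta (rho delta w).
Proof.
exists 1%N, [tuple w], [tuple 1].
by rewrite big_ord1 !tnth0 scale1r.
Qed.

Theorem mainTheorem3 (Sigma : finType) (m : nat)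
    (delta : 'I_m.+1 -> Sigma -> 'I_m.+1)
    (hsync : synchronizing delta)
    (k : nat) (ns : 'I_k -> nat)
    (phi : 'M[CC]_m -> forall i : 'I_k, 'M[CC]_(ns i))
    (hW : WedderburnData delta phi)
    (v u : seq Sigma) (hu : vMinimal delta phi v u) :
  forall a b : seq Sigma,
    inRadA delta (a ++ u ++ b) \/ vMinimal delta phi v (a ++ u ++ b).
Proof.
move=> a b.
case: hW => _ [_ _ hmul _] _ hrad.
case: hu => hinf hne hmin.
have hsub : supp delta phi (a ++ u ++ b) \subset supp delta phi u.
  apply/subsetP => i; rewrite !inE /theta; apply: contraNN => /eqP h.
  rewrite (rho_mul delta a (u ++ b)) (hmul _ _ (inR_rho delta a) (inR_rho delta (u ++ b))).
  rewrite (rho_mul delta u b) (hmul _ _ (inR_rho delta u) (inR_rho delta b)).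
  rewrite h.
  by rewrite mul0mx mulmx0.
case: (boolP (supp delta phi (a ++ u ++ b) == set0)) => [/eqP h0|hne'].
  left; rewrite /inRadA; apply/(hrad _ (inR_rho _ _)) => i.
  apply/eqP; have : i \notin supp delta phi (a ++ u ++ b) by rewrite h0 inE.
  by rewrite inE negbK.
right; split => //.
  exact: infix_trans hinf (infix_infix _ _ _).
move=> [z [hz1 hz2 hz3]]; apply: hmin; exists z; split => //.
exact (proper_sub_trans hz3 hsub).
Qed.
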